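(* Let $C_{12},C_{13},C_{23}$ be compatible bivariate copulas and let $C_L,C_U$ be defined as below. Define \[ F_U(u_1,u_2,u_3)=\min\{C_{12}(u_1,u_2),\,C_{13}(u_1,u_3),\,C_{23}(u_2,u_3),\,1-u_1-u_2-u_3+C_{12}(u_1,u_2)+C_{13}(u_1,u_3)+C_{23}(u_2,u_3)\}, \] \[ F_L(u_1,u_2,u_3)=\max\{0,\,C_{12}(u_1,u_2)+C_{13}(u_1,u_3)-u_1,\,C_{12}(u_1,u_2)+C_{23}(u_2,u_3)-u_2,\,C_{13}(u_1,u_3)+C_{23}(u_2,u_3)-u_3\}. \] Then for every $\mathbf u\in[0,1]^3$, $C_L(\mathbf u)\ge F_L(\mathbf u)$ and $C_U(\mathbf u)\le F_U(\mathbf u)$.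
   Context: A bivariate copula is a distribution function on $[0,1]^2$ with uniform $[0,1]$ marginals. Bivariate copulas $C_{12},C_{13},C_{23}$ are compatible if there is a distribution function $\widetilde C$ on $[0,1]^3$ with uniform marginals such that $\widetilde C(u_1,u_2,1)=C_{12}(u_1,u_2)$, $\widetilde C(u_1,1,u_3)=C_{13}(u_1,u_3)$, $\widetilde C(1,u_2,u_3)=C_{23}(u_2,u_3)$. Let $C_{ji}(u,v):=C_{ij}(v,u)$ for $i<j$, $W_2(u,v)=\max\{u+v-1,0\}$, $M_2(u,v)=\min\{u,v\}$, and for bivariate copulas $A,B,C$: $(A\ast_{C} B)(x,z)=\int_{0}^{1} C(\tfrac{\partial}{\partial t} A(x,t),\tfrac{\partial}{\partial t} B(t,z))\, dt$, $(A\star_{C} B)(x,y,z)=\int_{0}^{y} C(\tfrac{\partial}{\partial t} A(x,t),\tfrac{\partial}{\partial t} B(t,z))\, dt$ (partial derivatives a.e.). With $\mathcal P=\{(1,2,3),(1,3,2),(2,1,3)\}$, $C_L(u_1,u_2,u_3)=\max_{(i,j,k)\in\mathcal P}\max\{(C_{ij}\star_{W_2}C_{jk})(u_i,u_j,u_k),\ (C_{ij}\star_{M_2}C_{jk})(u_i,u_j,u_k)+C_{ik}(u_i,u_k)-(C_{ij}\ast_{M_2}C_{jk})(u_i,u_k)\}$ and $C_U(u_1,u_2,u_3)=\min_{(i,j,k)\in\mathcal P}\min\{(C_{ij}\star_{M_2}C_{jk})(u_i,u_j,u_k),\ (C_{ij}\star_{W_2}C_{jk})(u_i,u_j,u_k)+C_{ik}(u_i,u_k)-(C_{ij}\ast_{W_2}C_{jk})(u_i,u_k)\}$.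 *)

(* Defs.v *)
From HB Require Import structures.
From mathcomp Require Import all_boot all_order all_algebra.
From mathcomp Require Import all_classical all_reals all_analysis.
Set Implicit Arguments. Unset Strict Implicit. Unset Printing Implicit Defensive.
Import Order.TTheory GRing.Theory Num.Theory.
Import numFieldNormedType.Exports.
Local Open Scope classical_set_scope.
Local Open Scope ring_scope.

Section Copulas.
Variable R : realType.

Definition in01 (x : R) := 0 <= x <= 1.

(* bivariate copula: a distribution function on [0,1]^2 with uniform marginals
   (grounded, uniform margins, 2-increasing); values off [0,1]^2 are irrelevant *)
Definition is_copula2 (C : R -> R -> R) : Prop :=
  (forall u, in01 u -> C u 0 = 0 /\ C 0 u = 0 /\ C u 1 = u /\ C 1 u = u) /\
  (forall u1 u2 v1 v2, in01 u1 -> in01 u2 -> in01 v1 -> in01 v2 ->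
     u1 <= u2 -> v1 <= v2 -> 0 <= C u2 v2 - C u2 v1 - C u1 v2 + C u1 v1).

Definition is_copula3 (C : R -> R -> R -> R) : Prop :=
  (forall u v, in01 u -> in01 v ->
     C 0 u v = 0 /\ C u 0 v = 0 /\ C u v 0 = 0) /\
  (forall u, in01 u -> C u 1 1 = u /\ C 1 u 1 = u /\ C 1 1 u = u) /\
  (forall a1 b1 a2 b2 a3 b3, in01 a1 -> in01 b1 -> in01 a2 -> in01 b2 ->
     in01 a3 -> in01 b3 -> a1 <= b1 -> a2 <= b2 -> a3 <= b3 ->
     0 <= C b1 b2 b3 - C a1 b2 b3 - C b1 a2 b3 - C b1 b2 a3
          + C a1 a2 b3 + C a1 b2 a3 + C b1 a2 a3 - C a1 a2 a3).

Definition compatible (C12 C13 C23 : R -> R -> R) : Prop :=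
  exists Ct : R -> R -> R -> R, is_copula3 Ct /\
    forall u v, in01 u -> in01 v ->
      Ct u v 1 = C12 u v /\ Ct u 1 v = C13 u v /\ Ct 1 u v = C23 u v.

Definition W2 (u v : R) : R := Num.max (u + v - 1) 0.
Definition M2 (u v : R) : R := Num.min u v.

(* partial derivatives (taken to be 0 where they do not exist; this only
   affects a null set, the paper's "a.e.") *)
Definition pd2 (A : R -> R -> R) (x t : R) : R :=
  if `[< derivable (fun s => A x s) t 1 >] then 'D_1 (fun s => A x s) t else 0.
Definition pd1 (B : R -> R -> R) (t z : R) : R :=
  if `[< derivable (fun s => B s z) t 1 >] then 'D_1 (fun s => B s z) t else 0.

Definition astar (C A B : R -> R -> R) (x z : R) : R :=
  \int[lebesgue_measure]_(t in [set t : R | 0 <= t <= 1])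
     C (pd2 A x t) (pd1 B t z).

Definition sstar (C A B : R -> R -> R) (x y z : R) : R :=
  \int[lebesgue_measure]_(t in [set t : R | 0 <= t <= y])
     C (pd2 A x t) (pd1 B t z).

Definition flip (C : R -> R -> R) : R -> R -> R := fun u v => C v u.

(* the two terms for one triple (i,j,k) with copulas Cij, Cjk, Cik and
   arguments (ui,uj,uk) *)
Definition lowterm (Cij Cjk Cik : R -> R -> R) (ui uj uk : R) : R :=
  Num.max (sstar W2 Cij Cjk ui uj uk)
          (sstar M2 Cij Cjk ui uj uk + Cik ui uk - astar M2 Cij Cjk ui uk).
Definition upterm (Cij Cjk Cik : R -> R -> R) (ui uj uk : R) : R :=
  Num.min (sstar M2 Cij Cjk ui uj uk)
          (sstar W2 Cij Cjk ui uj uk + Cik ui uk - astar W2 Cij Cjk ui uk).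

(* P = {(1,2,3),(1,3,2),(2,1,3)} ; C_ji(u,v) = C_ij(v,u) *)
Definition CL (C12 C13 C23 : R -> R -> R) (u1 u2 u3 : R) : R :=
  Num.max (lowterm C12 C23 C13 u1 u2 u3)
    (Num.max (lowterm C13 (flip C23) C12 u1 u3 u2)
             (lowterm (flip C12) C13 C23 u2 u1 u3)).
Definition CU (C12 C13 C23 : R -> R -> R) (u1 u2 u3 : R) : R :=
  Num.min (upterm C12 C23 C13 u1 u2 u3)
    (Num.min (upterm C13 (flip C23) C12 u1 u3 u2)
             (upterm (flip C12) C13 C23 u2 u1 u3)).

Definition FU (C12 C13 C23 : R -> R -> R) (u1 u2 u3 : R) : R :=
  Num.min (C12 u1 u2) (Num.min (C13 u1 u3) (Num.min (C23 u2 u3)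
    (1 - u1 - u2 - u3 + C12 u1 u2 + C13 u1 u3 + C23 u2 u3))).
Definition FL (C12 C13 C23 : R -> R -> R) (u1 u2 u3 : R) : R :=
  Num.max 0 (Num.max (C12 u1 u2 + C13 u1 u3 - u1)
    (Num.max (C12 u1 u2 + C23 u2 u3 - u2) (C13 u1 u3 + C23 u2 u3 - u3))).

End Copulas.

(* Main.v *)
Require Import Defs.
From HB Require Import structures.
From mathcomp Require Import all_boot all_order all_algebra.
From mathcomp Require Import all_classical all_reals all_analysis.
From mathcomp Require Import measurable_realfun lra.
Import Order.TTheory GRing.Theory Num.Theory.
Import numFieldNormedType.Exports.
Local Open Scope classical_set_scope.
Local Open Scope ring_scope.
Section AE.
Context d (T : measurableType d) (R : realType) (mu : {measure set T -> \bar R}).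
Local Open Scope ereal_scope.

Lemma mono_ge0_integral (D : set T) (f1 f2 : T -> \bar R) :
  (forall x, D x -> 0 <= f1 x) -> (forall x, D x -> f1 x <= f2 x) ->
  \int[mu]_(x in D) f1 x <= \int[mu]_(x in D) f2 x.
Proof.
move=> f10 f12.
have f20 : forall x, D x -> 0 <= f2 x by move=> x Dx; exact: le_trans (f10 x Dx) (f12 x Dx).
rewrite (ge0_integralE _ f10) (ge0_integralE _ f20) /=.
apply: ereal_sup_le => _ [h hf <-]; exists h => // x.
apply: le_trans (hf x) _; rewrite /patch; case: ifPn => // /set_mem; exact: f12.
Qed.

Lemma measurable_mem_fun (D N : set T) : measurable D -> measurable N ->
  measurable_fun D (fun x => x \in N).
Proof.
move=> mD mN; apply: (@measurable_fun_bool _ _ _ _ true).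
suff -> : D `&` (fun x => x \in N) @^-1` [set true] = D `&` N by exact: measurableI.
apply/seteqP; split => x [Dx /= Nx]; split => //.
  - by move: Nx; rewrite /preimage /= => /eqP; rewrite eqb_id => /set_mem.
  - by rewrite /preimage /= (mem_set Nx).
Qed.

Lemma ae_ge0_integral (D N : set T) (F G : T -> \bar R) :
  measurable D -> measurable N -> mu N = 0 ->
  (forall x, D x -> 0 <= F x) -> (forall x, D x -> 0 <= G x) ->
  measurable_fun D G -> (forall x, D x -> ~ N x -> F x = G x) ->
  \int[mu]_(x in D) F x = \int[mu]_(x in D) G x.
Proof.
move=> mD mN N0 F0 G0 mG FG.
pose G1 x := if x \in N then 0 else G x.
pose G2 x := if x \in N then +oo else G x.
have mG1 : measurable_fun D G1.
  apply: measurable_fun_if => //; first exact: measurable_mem_fun.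
  by apply: measurable_funS mG => //; exact: subIsetl.
have mG2 : measurable_fun D G2.
  apply: measurable_fun_if => //; first exact: measurable_mem_fun.
  by apply: measurable_funS mG => //; exact: subIsetl.
have aeN (H : T -> \bar R) : (forall x, ~ N x -> H x = G x) ->
    ae_eq mu D H G.
  move=> HG; exists N; split => // x /= /not_implyP [Dx]; apply: contra_notP => Nx.
  exact: HG.
have E1 : \int[mu]_(x in D) G1 x = \int[mu]_(x in D) G x.
  apply: ae_eq_integral => //; apply: aeN => x Nx.
  by rewrite /G1 ifF //; apply/negbTE/negP => /set_mem.
have E2 : \int[mu]_(x in D) G2 x = \int[mu]_(x in D) G x.
  apply: ae_eq_integral => //; apply: aeN => x Nx.
  by rewrite /G2 ifF //; apply/negbTE/negP => /set_mem.
apply/eqP; rewrite eq_le; apply/andP; split.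
  rewrite -E2; apply: mono_ge0_integral => // x Dx.
  rewrite /G2; case: ifPn => [_|/negP xN]; first exact: leey.
  by rewrite FG // => /mem_set.
rewrite -E1; apply: mono_ge0_integral => x Dx; rewrite /G1.
  by case: ifPn => // _; exact: G0.
case: ifPn => [_|/negP xN]; first exact: F0.
by rewrite FG // => /mem_set.
Qed.

Lemma ae_integral (D N : set T) (F G : T -> \bar R) :
  measurable D -> measurable N -> mu N = 0 ->
  measurable_fun D G -> (forall x, D x -> ~ N x -> F x = G x) ->
  \int[mu]_(x in D) F x = \int[mu]_(x in D) G x.
Proof.
move=> mD mN N0 mG FG; rewrite integralE [RHS]integralE.
congr (_ - _); apply: ae_ge0_integral mN N0 _ _ _ _ => //.
- exact: measurable_funepos.
- by move=> x Dx Nx; rewrite !funeposE FG.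
- exact: measurable_funeneg.
- by move=> x Dx Nx; rewrite !funenegE FG.
Qed.

End AE.

Section Dens.
Context {R : realType}.
Local Notation mu := (@lebesgue_measure R).

Definition good (f : R -> R) := f 0 = 0 /\
  forall s t, 0 <= s -> s <= t -> t <= 1 -> f s <= f t /\ f t - f s <= t - s.

Definition clamp (t : R) : R := Num.min (Num.max t 0) 1.

Lemma clamp01 t : 0 <= clamp t <= 1.
Proof. rewrite /clamp !(maxEle, minEle); do ?case: ifPn; lra. Qed.

Lemma clamp_id t : 0 <= t <= 1 -> clamp t = t.
Proof. rewrite /clamp !(maxEle, minEle); do ?case: ifPn; lra. Qed.

Lemma clamp_le {s t} : s <= t -> clamp s <= clamp t /\ clamp t - clamp s <= t - s.
Proof. rewrite /clamp !(maxEle, minEle); do ?case: ifPn; lra. Qed.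

Lemma good_ft f : good f -> let ft := f \o clamp in
  (forall s t, s <= t -> ft s <= ft t /\ ft t - ft s <= t - s).
Proof.
move=> [_ gf] ft s t st; have [c1 c2] := clamp_le st.
have := clamp01 s; have := clamp01 t => /andP[? ?] /andP[? ?].
have [h1 h2] := gf (clamp s) (clamp t) ltac:(done) c1 ltac:(done).
rewrite /ft /=; split => //; lra.
Qed.

Lemma lip_continuous (h : R -> R) :
  (forall s t, s <= t -> h s <= h t /\ h t - h s <= t - s) -> continuous h.
Proof.
move=> hl x; apply/(@cvgrPdist_le _ R^o) => e e0; near=> y.
have : `|x - y| <= e by near: y; exact: (@cvgr_dist_le _ R^o _ (nbhs x) _ id x (@cvg_id _ _) e e0).
have [xy|yx] := leP x y.
  have [h1 h2] := hl _ _ xy.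
  rewrite (ler0_norm (x := x - y)); last lra.
  rewrite ler0_norm; lra.
have [h1 h2] := hl _ _ (ltW yx).
rewrite (ger0_norm (x := x - y)); last lra.
rewrite ger0_norm; lra.
Unshelve. all: by end_near. Qed.

Lemma wlength_le (F : cumulative R R) (Fl : forall s t, s <= t -> F t - F s <= t - s)
  (X : set (ocitv_type R)) : R.-ocitv.-measurable X ->
  (wlength F X <= wlength idfun X)%E.
Proof.
move=> /ocitvP[->|[[a b] /= ab ->]]; first by rewrite !wlength0.
rewrite !wlength_itv /= lte_fin ab /= lee_fin; exact: Fl (ltW ab).
Qed.

Lemma ls_le (F : cumulative R R) (Fl : forall s t, s <= t -> F t - F s <= t - s)
  (A : set R) : (lebesgue_stieltjes_measure F A <= mu A)%E.
Proof.
rewrite /lebesgue_measure /lebesgue_stieltjes_measure /measure_extension /mu_ext.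
apply/ereal_infP => _ [B [mB AB] <-].
apply: ge_ereal_inf; exists (\sum_(k <oo) wlength F (B k))%E; first by exists B.
apply: lee_nneseries => n _; last exact: wlength_le.
move=> *; exact: wlength_ge0.
Qed.

Definition pd (f : R -> R) (t : R) : R :=
  if `[< derivable f t 1 >] then 'D_1 f t else 0.

Lemma good_density f : good f -> exists g : R -> R,
  [/\ mu.-integrable setT (EFin \o g), (forall x, 0 <= g x),
   (forall y, 0 <= y <= 1 -> \int[mu]_(t in `[0, y]) g t = f y) &
   exists N : set R, [/\ measurable N, mu N = 0%E &
     forall t, 0 <= t <= 1 -> ~ N t -> pd f t = g t]].
Proof.
move=> gf; have [f0 fl] := gf.
pose ft := f \o clamp.
have ftl := @good_ft f gf; rewrite -/ft in ftl.
have ftnd : {homo ft : x y / x <= y} by move=> x y /ftl[].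
have ftrc : right_continuous ft.
  by apply: right_continuousW; exact: lip_continuous.
pose F : cumulative R R := HB.pack ft (isCumulative.Build R _ R ft ftnd ftrc).
have Fl : forall s t, s <= t -> F t - F s <= t - s by move=> s t /ftl[].
pose nu : {measure set (measurableTypeR R) -> \bar R} := lebesgue_stieltjes_measure F.
have nuoc (a b : R) : a <= b -> nu `]a, b]%classic = (ft b - ft a)%:E.
  move=> ab; rewrite [LHS]/= /lebesgue_stieltjes_measure /measure_extension.
  rewrite measurable_mu_extE /=; last exact: is_ocitv.
  rewrite wlength_itv /= lte_fin; case: ltgtP ab => //= -> _.
  by rewrite subrr.
have mE : measurable (`]0, 1]%classic : set (measurableTypeR R)) by exact: measurable_itv.
have nuE : (nu `]0%R, 1%R]%classic < +oo)%E by rewrite nuoc ?ler01 // ltry.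
pose nu' : {finite_measure set (measurableTypeR R) -> \bar R} := mfrestr mE nuE.
have numu : nu' `<< mu.
  move=> A muA B mB BA; apply/eqP; rewrite eq_le measure_ge0 andbT.
  rewrite -(muA B mB BA).
  apply: (le_trans _ (@ls_le F Fl B)).
  rewrite /= /mfrestr /mrestr /= le_measure ?inE //.
by apply: measurableI => //; exact: measurable_itv.
have [ge [ge0 gfin gint gE]] := radon_nikodym_sigma_finite numu.
pose g x := fine (ge x).
have Eg : EFin \o g = ge by apply/funext => x /=; rewrite fineK.
have gint' : mu.-integrable setT (EFin \o g) by rewrite Eg.
have gI y : 0 <= y <= 1 -> \int[mu]_(t in `[0, y]) g t = f y.
  move=> /andP[y0 y1].
  rewrite /Rintegral.
  have -> : (\int[mu]_(t in `[0%R, y]) (g t)%:E = \int[mu]_(t in `[0%R, y]) ge t)%E.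
    by rewrite -Eg.
  rewrite -gE; last exact: measurable_itv.
  rewrite /= /mfrestr /mrestr /=.
  have -> : `[0%R, y]%classic `&` `]0%R, 1%R]%classic = `]0%R, y]%classic :> set R.
    apply/seteqP; split => x /=; rewrite !in_itv /=.
      by move=> [/andP[? ?] /andP[? ?]]; apply/andP; split => //.
    by move=> /andP[? ?]; split; apply/andP; split => //; lra.
  rewrite nuoc //= /ft /= clamp_id ?y0 ?y1 // clamp_id ?ler01 ?lexx // f0 subr0.
  by [].
exists g; split => //.
  by move=> x; apply: fine_ge0; exact: ge0.
have intg y : mu.-integrable [set` Interval (BLeft 0) (BRight y)] (EFin \o g).
  by apply: integrableS gint' => //; exact: measurable_itv.
have locg : locally_integrable [set: R] g.
  by have := integrable_locally measurableT gint'; rewrite patch_setT.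
pose Fg := fun x => \int[mu]_(t in [set` Interval (BLeft 0) (BRight x)]) g t.
move: (@FTC1 R g (BLeft 0) intg locg) => /= ftc.
have neg1 (r : R) : mu.-negligible [set r].
  by exists [set r]; split; [exact: measurable_set1|exact: lebesgue_measure_set1|].
have [N [mN N0 sub]] := negligibleU (negligibleU ftc (neg1 0)) (neg1 1).
exists N; split => // t /andP[t0 t1] Nt.
have [tP t0' t1'] : [/\ ((0:R)%:E < t%:E)%E -> derivable Fg t 1 /\ (Fg^`())%classic t = g t,
    t != 0%R & t != 1%R].
  split.
  - move=> h0; apply: contrapT => H; apply: Nt; apply: sub; left; left => HP.
    by apply: H; exact: HP h0.
  - by apply/eqP => t0E; apply: Nt; apply: sub; left; right.
  - by apply/eqP => t1E; apply: Nt; apply: sub; right.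
have t01 : t \in `]0, 1[ by rewrite in_itv /= !lt_neqAle t0 t1 eq_sym t0' t1'.
have [dF dFg] := tP ltac:(by rewrite lte_fin lt_neqAle eq_sym t0' t0).
have nt : \forall s \near t, Fg s = f s.
  apply: filterS (near_in_itvoo t01) => s; rewrite in_itv /= => /andP[s0 s1].
  by apply: gI; rewrite !ltW.
have df : derivable f t 1 := near_eq_derivable nt dF.
rewrite derive1E in dFg.
by rewrite /pd asboolT // -dFg (near_eq_derive _ nt).
Qed.

End Dens.

Section K.
Context {R : realType}.
Local Notation mu := (@lebesgue_measure R).

Definition Sint (Phi : R -> R -> R) (f1 f2 : R -> R) (y : R) : R :=
  \int[mu]_(t in [set t : R | 0 <= t <= y]) Phi (pd f1 t) (pd f2 t).

Lemma set_cc (y : R) : [set t : R | 0 <= t <= y] = `[0, y]%classic.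
Proof. by apply/seteqP; split => x; rewrite /= in_itv. Qed.

Lemma Kgen (f1 f2 g1 g2 : R -> R) (N1 N2 : set R) (Phi : R -> R -> R) :
  measurable N1 -> mu N1 = 0%E -> measurable N2 -> mu N2 = 0%E ->
  (forall t, 0 <= t <= 1 -> ~ N1 t -> pd f1 t = g1 t) ->
  (forall t, 0 <= t <= 1 -> ~ N2 t -> pd f2 t = g2 t) ->
  mu.-integrable setT (EFin \o g1) -> mu.-integrable setT (EFin \o g2) ->
  (forall x, 0 <= g1 x) -> (forall x, 0 <= g2 x) ->
  (forall (D : set R) (h1 h2 : R -> R), measurable_fun D h1 -> measurable_fun D h2 ->
     measurable_fun D (fun t => Phi (h1 t) (h2 t))) ->
  (forall a b, 0 <= a -> 0 <= b -> `|Phi a b| <= a + b) ->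
  mu.-integrable setT (EFin \o (fun t => Phi (g1 t) (g2 t))) /\
  forall y, 0 <= y <= 1 ->
    Sint Phi f1 f2 y = \int[mu]_(t in `[0, y]) Phi (g1 t) (g2 t).
Proof.
move=> mN1 N10 mN2 N20 e1 e2 i1 i2 g10 g20 mPhi bPhi.
have mg1 : measurable_fun setT g1 by apply/measurable_EFinP; exact: measurable_int i1.
have mg2 : measurable_fun setT g2 by apply/measurable_EFinP; exact: measurable_int i2.
have mP : measurable_fun setT (fun t => Phi (g1 t) (g2 t)) by exact: mPhi.
split.
  have := @le_integrable _ _ _ mu setT measurableT (EFin \o (fun t => Phi (g1 t) (g2 t))) (EFin \o (fun t => g1 t + g2 t)).
  apply.
  - exact/measurable_EFinP.
  - move=> x _; change (`|(Phi (g1 x) (g2 x))%:E| <= `|(g1 x + g2 x)%:E|)%E.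
    rewrite !abse_EFin lee_fin (ger0_norm (addr_ge0 (g10 x) (g20 x))).
    exact: bPhi.
  - have -> : EFin \o (fun t => g1 t + g2 t) = ((EFin \o g1) \+ (EFin \o g2))%E.
      by apply/funext => x.
    exact: integrableD.
move=> y /andP[y0 y1]; rewrite /Sint set_cc /Rintegral; congr fine.
have mN : measurable (N1 `|` N2) by exact: measurableU.
have := @ae_integral _ _ _ mu `[0%R,y]%classic (N1 `|` N2) (fun x => (Phi (pd f1 x) (pd f2 x))%:E) (fun x => (Phi (g1 x) (g2 x))%:E).
apply => //.
- apply/eqP; rewrite eq_le measure_ge0 andbT.
  have H : (mu (N1 `|` N2) <= mu N1 + mu N2)%E := measureU2 mu mN1 mN2.
  by rewrite N10 N20 adde0 in H.
- apply/measurable_EFinP; apply: measurable_funS mP => //; exact: measurable_itv.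
- move=> x; rewrite /= in_itv /= => /andP[x0 xy] Nx.
  have x1 : 0 <= x <= 1 by rewrite x0 /=; exact: le_trans xy y1.
  rewrite e1 ?e2 // => ?; apply: Nx; [right|left] => //.
Qed.

Lemma int_cst1 (D : set R) : measurable D -> (mu D < +oo)%E ->
  mu.-integrable D (EFin \o cst (1:R)).
Proof.
move=> mD muD; apply/integrableP; split; first by apply/measurable_EFinP; exact: measurable_cst.
rewrite (@eq_integral _ _ _ mu D (cst 1%E) (fun x => `|(EFin \o cst 1%R) x|%E)); last by move=> x _; rewrite /= normr1.
by rewrite integral_cst // mul1e.
Qed.

Lemma Rint_cst1 (D : set R) : measurable D -> (mu D < +oo)%E ->
  \int[mu]_(t in D) (1:R) = fine (mu D).
Proof. by move=> mD _; rewrite Rintegral_cst // mul1r. Qed.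

Lemma W2_meas (D : set R) (h1 h2 : R -> R) : measurable_fun D h1 -> measurable_fun D h2 ->
  measurable_fun D (fun t => W2 (h1 t) (h2 t)).
Proof.
move=> m1 m2; rewrite /W2.
apply: (@measurable_maxr _ _ _ D (fun t => h1 t + h2 t - 1) (cst 0)); last exact: measurable_cst.
apply: measurable_funB; last exact: measurable_cst.
exact: measurable_funD.
Qed.

Lemma M2_meas (D : set R) (h1 h2 : R -> R) : measurable_fun D h1 -> measurable_fun D h2 ->
  measurable_fun D (fun t => M2 (h1 t) (h2 t)).
Proof. by move=> m1 m2; rewrite /M2; exact: (@measurable_minr _ _ _ D h1 h2). Qed.

Lemma W2_bnd (a b : R) : 0 <= a -> 0 <= b -> `|W2 a b| <= a + b.
Proof.
move=> a0 b0; rewrite /W2 ger0_norm; last by rewrite le_max lexx orbT.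
by rewrite ge_max; apply/andP; split; [rewrite lerBlDr lerDl|exact: addr_ge0].
Qed.

Lemma M2_bnd (a b : R) : 0 <= a -> 0 <= b -> `|M2 a b| <= a + b.
Proof.
move=> a0 b0; rewrite /M2 ger0_norm; last by rewrite le_min a0 b0.
by rewrite ge_min lerDl b0.
Qed.

Lemma W2_lb (D : set R) (g1 g2 : R -> R) : measurable D -> (mu D < +oo)%E ->
  mu.-integrable setT (EFin \o g1) -> mu.-integrable setT (EFin \o g2) ->
  mu.-integrable setT (EFin \o (fun t => W2 (g1 t) (g2 t))) ->
  \int[mu]_(t in D) g1 t + \int[mu]_(t in D) g2 t - fine (mu D) <=
  \int[mu]_(t in D) W2 (g1 t) (g2 t).
Proof.
move=> mD muD i1 i2 iW.
have i1' : mu.-integrable D (EFin \o g1) by exact: integrableS i1.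
have i2' : mu.-integrable D (EFin \o g2) by exact: integrableS i2.
have iW' : mu.-integrable D (EFin \o (fun t => W2 (g1 t) (g2 t))) by exact: integrableS iW.
have ic := @int_cst1 D mD muD.
rewrite -(@Rint_cst1 D mD muD) -RintegralD // -RintegralB //; last first.
  have -> : EFin \o (fun x => g1 x + g2 x) = ((EFin \o g1) \+ (EFin \o g2))%E.
    by apply/funext.
  exact: integrableD.
apply: le_Rintegral => //.
- have -> : EFin \o (fun x => g1 x + g2 x - 1) = ((EFin \o g1) \+ (EFin \o g2) \- (EFin \o cst 1%R))%E.
    by apply/funext.
  by apply: integrableB => //; exact: integrableD.
- by move=> x _; rewrite /W2 le_max lexx.
Qed.

Lemma Kfacts (f1 f2 : R -> R) : good f1 -> good f2 -> forall y, 0 <= y <= 1 ->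
  [/\ Sint (@M2 R) f1 f2 y <= f1 y, Sint (@M2 R) f1 f2 y <= f2 y, 0 <= Sint (@W2 R) f1 f2 y,
      f1 y + f2 y - y <= Sint (@W2 R) f1 f2 y &
      f1 1 - f1 y + (f2 1 - f2 y) - (1 - y) <= Sint (@W2 R) f1 f2 1 - Sint (@W2 R) f1 f2 y].
Proof.
move=> gf1 gf2 y /andP[y0 y1].
have [g1 [i1 g10 gI1 [N1 [mN1 N10 e1]]]] := @good_density _ f1 gf1.
have [g2 [i2 g20 gI2 [N2 [mN2 N20 e2]]]] := @good_density _ f2 gf2.
have [iW SW] := @Kgen f1 f2 g1 g2 N1 N2 (@W2 R) mN1 N10 mN2 N20 e1 e2 i1 i2 g10 g20 W2_meas W2_bnd.
have [iM SM] := @Kgen f1 f2 g1 g2 N1 N2 (@M2 R) mN1 N10 mN2 N20 e1 e2 i1 i2 g10 g20 M2_meas M2_bnd.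
have y01 : 0 <= y <= 1 by rewrite y0 y1.
have mI (a b : R) : measurable (`[a, b]%classic : set R) by exact: measurable_itv.
have muI : (mu `[0%R, y]%classic < +oo)%E by rewrite lebesgue_measure_itv; case: ifP => _; rewrite ltry.
have fmuI : fine (mu `[0%R, y]%classic) = y.
  rewrite lebesgue_measure_itv /= lte_fin; case: ltgtP y0 => //=.
  by move=> _ _; rewrite subr0.
split.
- rewrite SM // -(gI1 y y01).
  apply: le_Rintegral => //; [exact: integrableS iM|exact: integrableS i1|].
  by move=> x _; rewrite /M2 ge_min lexx.
- rewrite SM // -(gI2 y y01).
  apply: le_Rintegral => //; [exact: integrableS iM|exact: integrableS i2|].
  by move=> x _; rewrite /M2 ge_min lexx orbT.
- by apply: Rintegral_ge0 => x _; rewrite /W2 le_max lexx orbT.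
- rewrite SW // -(gI1 y y01) -(gI2 y y01) -[X in _ - X <= _]fmuI.
  exact: W2_lb.
have o1 : 0 <= (1:R) <= 1 by rewrite ler01 lexx.
rewrite !SW // -(gI1 1 o1) -(gI2 1 o1) -(gI1 y y01) -(gI2 y y01).
have sU : `[0%R, 1%R]%classic = `[0%R, y]%classic `|` `]y, 1%R]%classic :> set R.
  apply/seteqP; split => x /=; rewrite !in_itv /=.
    move=> /andP[x0 x1]; have [xy|yx] := leP x y; [left|right]; apply/andP; split => //.
  by case=> /andP[x0 x1]; apply/andP; split => //; lra.
have dj : [disjoint (`[0%R, y]%classic : set R) & `]y, 1%R]%classic].
  by apply/disj_setPS => x [] /=; rewrite !in_itv /= => /andP[_ a] /andP[b _]; lra.
have spl (h : R -> R) : mu.-integrable setT (EFin \o h) ->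
    \int[mu]_(t in `[0%R, 1%R]) h t =
    \int[mu]_(t in `[0%R, y]) h t + \int[mu]_(t in `]y, 1%R]) h t.
  move=> ih; rewrite sU Rintegral_setU //; try exact: measurable_itv.
  by apply: integrableS ih => //; apply: measurableU; exact: measurable_itv.
rewrite (spl _ i1) (spl _ i2) (spl _ iW).
have muoc : (mu `]y, 1%R]%classic < +oo)%E by rewrite lebesgue_measure_itv; case: ifP => _; rewrite ltry.
have fmuoc : fine (mu `]y, 1%R]%classic) = 1 - y.
  rewrite lebesgue_measure_itv /= lte_fin; case: ltgtP y1 => //=.
  by move=> ->; rewrite subrr.
have := @W2_lb `]y, 1%R]%classic g1 g2 (measurable_itv _) muoc i1 i2 iW.
rewrite fmuoc; lra.
Qed.

End K.

Section Final.
Context {R : realType}.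

Lemma alg (S A c12 c13 c23 c121 c231 u1 u2 u3 : R) : c121 = u1 -> c231 = u3 ->
  c121 - c12 + (c231 - c23) - (1 - u2) <= A - S ->
  S + c13 - A <= 1 - u1 - u2 - u3 + c12 + c13 + c23.
Proof. move=> <- <-; lra. Qed.

Lemma mx1 (x a b : R) : x <= a -> x <= Num.max a b.
Proof. by move=> h; rewrite le_max h. Qed.
Lemma mx2 (x a b : R) : x <= b -> x <= Num.max a b.
Proof. by move=> h; rewrite le_max h orbT. Qed.
Lemma mn1 (x a b : R) : a <= x -> Num.min a b <= x.
Proof. by move=> h; rewrite ge_min h. Qed.
Lemma mn2 (x a b : R) : b <= x -> Num.min a b <= x.
Proof. by move=> h; rewrite ge_min h orbT. Qed.
Lemma gmx (x a b : R) : a <= x -> b <= x -> Num.max a b <= x.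
Proof. by move=> h1 h2; rewrite ge_max h1 h2. Qed.
Lemma lmn (x a b : R) : x <= a -> x <= b -> x <= Num.min a b.
Proof. by move=> h1 h2; rewrite le_min h1 h2. Qed.

Lemma cop_good (C : R -> R -> R) x : is_copula2 C -> in01 x ->
  good (fun s => C x s) /\ good (fun s => C s x).
Proof.
move=> [marg inc] hx; have [Cx0 [C0x [Cx1 C1x]]] := marg x hx.
have i0 : in01 (0:R) by rewrite /in01 lexx ler01.
have i1 : in01 (1:R) by rewrite /in01 ler01 lexx.
move: (hx); rewrite /in01 => /andP[x0 x1].
split; split => //.
- move=> s t s0 st t1.
  have hs : in01 s by rewrite /in01 s0 (le_trans st t1).
  have ht : in01 t by rewrite /in01 (le_trans s0 st) t1.
  have [C0s [_ [C1s _]]] := marg s hs; have [C0t [_ [C1t _]]] := marg t ht.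
  have [_ [Cs0 [_ C1s']]] := marg s hs; have [_ [Ct0 [_ C1t']]] := marg t ht.
  have h1 := inc 0 x s t i0 hx hs ht x0 st.
  have h2 := inc x 1 s t hx i1 hs ht x1 st.
  rewrite Ct0 Cs0 in h1; rewrite C1t' C1s' in h2.
  split; lra.
- move=> s t s0 st t1.
  have hs : in01 s by rewrite /in01 s0 (le_trans st t1).
  have ht : in01 t by rewrite /in01 (le_trans s0 st) t1.
  have [Cs0 [_ [Cs1 _]]] := marg s hs; have [Ct0 [_ [Ct1 _]]] := marg t ht.
  have h1 := inc s t 0 x hs ht i0 hx st x0.
  have h2 := inc s t x 1 hs ht hx i1 st x1.
  rewrite Ct0 Cs0 in h1; rewrite Ct1 Cs1 in h2.
  split; lra.
Qed.

Lemma sstarE (Phi A B : R -> R -> R) x y z :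
  sstar Phi A B x y z = Sint Phi (fun s => A x s) (fun s => B s z) y.
Proof. by []. Qed.

Lemma astarE (Phi A B : R -> R -> R) x z :
  astar Phi A B x z = Sint Phi (fun s => A x s) (fun s => B s z) 1.
Proof. by []. Qed.

End Final.

Theorem proposition5p1 (R : realType) (C12 C13 C23 : R -> R -> R) :
  is_copula2 C12 -> is_copula2 C13 -> is_copula2 C23 ->
  compatible C12 C13 C23 ->
  forall u1 u2 u3 : R, in01 u1 -> in01 u2 -> in01 u3 ->
    FL C12 C13 C23 u1 u2 u3 <= CL C12 C13 C23 u1 u2 u3 /\
    CU C12 C13 C23 u1 u2 u3 <= FU C12 C13 C23 u1 u2 u3.
Proof.
move=> h12 h13 h23 _ u1 u2 u3 i1 i2 i3.
have [g12a g12b] := cop_good _ u1 h12 i1.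
have [g12c g12d] := cop_good _ u2 h12 i2.
have [g13a g13b] := cop_good _ u1 h13 i1.
have [g13c g13d] := cop_good _ u3 h13 i3.
have [g23a g23b] := cop_good _ u2 h23 i2.
have [g23c g23d] := cop_good _ u3 h23 i3.
have [m12 _] := h12; have [m13 _] := h13; have [m23 _] := h23.
have [_ [_ [C12u11 _]]] := m12 u1 i1.
have [_ [_ [_ C23u31]]] := m23 u3 i3.
have [T1a T1b T1c T1d T1e] := Kfacts _ _ g12a g23d _ i2.
have [T2a T2b T2c T2d T2e] := Kfacts _ _ g13a g23a _ i3.
have [T3a T3b T3c T3d T3e] := Kfacts _ _ g12d g13d _ i1.
have L1 : Sint (@W2 R) (fun s => C12 u1 s) (fun s => C23 s u3) u2 <= CL C12 C13 C23 u1 u2 u3.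
  by rewrite /CL /lowterm; apply: mx1; apply: mx1; exact: lexx.
have L2 : Sint (@W2 R) (fun s => C13 u1 s) (fun s => C23 u2 s) u3 <= CL C12 C13 C23 u1 u2 u3.
  by rewrite /CL /lowterm; apply: mx2; apply: mx1; apply: mx1; exact: lexx.
have L3 : Sint (@W2 R) (fun s => C12 s u2) (fun s => C13 s u3) u1 <= CL C12 C13 C23 u1 u2 u3.
  by rewrite /CL /lowterm; apply: mx2; apply: mx2; apply: mx1; exact: lexx.
have M1 : CU C12 C13 C23 u1 u2 u3 <= Sint (@M2 R) (fun s => C12 u1 s) (fun s => C23 s u3) u2.
  by rewrite /CU /upterm; apply: mn1; apply: mn1; exact: lexx.
have M3 : CU C12 C13 C23 u1 u2 u3 <= Sint (@M2 R) (fun s => C13 u1 s) (fun s => C23 u2 s) u3.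
  by rewrite /CU /upterm; apply: mn2; apply: mn1; apply: mn1; exact: lexx.
have W1 : CU C12 C13 C23 u1 u2 u3 <=
    Sint (@W2 R) (fun s => C12 u1 s) (fun s => C23 s u3) u2 + C13 u1 u3
    - Sint (@W2 R) (fun s => C12 u1 s) (fun s => C23 s u3) 1.
  by rewrite /CU /upterm; apply: mn1; apply: mn2; exact: lexx.
split.
- rewrite /FL.
  apply: gmx.
  exact: le_trans T1c L1.
  apply: gmx; first exact: le_trans T3d L3.
  apply: gmx; first exact: le_trans T1d L1.
  exact: le_trans T2d L2.
- rewrite /FU; apply: lmn; first exact: le_trans M1 T1a.
  apply: lmn; first exact: le_trans M3 T2a.
  apply: lmn; first exact: le_trans M1 T1b.
  apply: le_trans W1 _.
  exact: alg C12u11 C23u31 T1e.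
Qed.
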